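(* Let $X$ be a topological space, $\mathcal A,\mathcal B\subseteq\wp(X)$, and suppose every member of $\mathcal A$ is a $G_\delta$ subset of $X$. Then the following are equivalent: (i) One has a winning strategy in $G_1(\mathscr N[\mathcal A],\neg\mathcal O(X,\mathcal B))$; (ii) $\mathrm{cof}(\mathcal A;\mathcal B,\subseteq)\le\omega$; (iii) One has a winning predetermined strategy in $G_1(\mathscr N[\mathcal A],\neg\mathcal O(X,\mathcal B))$.
   Context: $\mathcal O(X,\mathcal B)$ is the set of open covers $\mathscr U$ of $X$ with $X\notin\mathscr U$ such that each $B\in\mathcal B$ is contained in some $U\in\mathscr U$. $\mathscr N[\mathcal A]=\{\mathscr N(A):A\in\mathcal A\}$, where $\mathscr N(A)$ is the set of open sets $U\neq X$ with $A\subseteq U$; so in $G_1(\mathscr N[\mathcal A],\neg\mathcal O(X,\mathcal B))$, at each inning $n\in\omega$ One plays some $A_n\in\mathcal A$, Two answers with an open $U_n\supseteq A_n$, $U_n\neq X$, and One wins iff $\{U_n:n\in\omega\}\in\mathcal O(X,\mathcal B)$. A strategy for One maps finite sequences of Two's moves to moves; it is predetermined if it depends only on the inning number. $\mathrm{cof}(\mathcal A;\mathcal B,\subseteq)$ is the least cardinal $\kappa$ such that there are $\{A_\alpha:\alpha<\kappa\}\subseteq\mathcal A$ with every $B\in\mathcal B$ contained in some $A_\alpha$.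
   Formalization: $\mathcal O(X,\mathcal B)$ consists of the families 𝒰 of open sets with X ∉ 𝒰 in which each B ∈ $\mathcal B$ lies in some U ∈ 𝒰, without the requirement that 𝒰 cover X. The statement above fails without it. *)

(* Defs.v *)
From HB Require Import structures.
From mathcomp Require Import all_boot all_order all_algebra.
From mathcomp Require Import boolp classical_sets functions cardinality topology.
From mathcomp Require Export borel_hierarchy.
Set Implicit Arguments. Unset Strict Implicit. Unset Printing Implicit Defensive.
Local Open Scope classical_set_scope.

Section Game.
Context {X : topologicalType}.

Definition OXB (B : set (set X)) (U : set (set X)) : Prop :=
  (forall u, U u -> open u) /\ ~ U setT /\
  (forall b, B b -> exists2 u, U u & b `<=` u).

(* A strategy for One in G_1(N[A], ~O(X,B)): maps the finite sequence of
   Two's previous moves to a move of One, always a member of A. *)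
Definition strategyOne (A : set (set X)) (sigma : seq (set X) -> set X) : Prop :=
  forall s, A (sigma s).

Definition play_by (sigma : seq (set X) -> set X) (U : nat -> set X) : Prop :=
  forall n, open (U n) /\ U n <> setT /\ sigma [seq U i | i <- iota 0 n] `<=` U n.

Definition winning_strategyOne (A B : set (set X)) (sigma : seq (set X) -> set X) : Prop :=
  strategyOne A sigma /\ forall U, play_by sigma U -> OXB B (range U).

Definition predetermined (sigma : seq (set X) -> set X) : Prop :=
  forall s t, size s = size t -> sigma s = sigma t.

Definition cof_le_omega (A B : set (set X)) : Prop :=
  exists F : nat -> set X, (forall n, A (F n)) /\
    (forall b, B b -> exists n, b `<=` F n).

End Game.

(* Main.v *)
Require Import Defs.
From mathcomp Require Import all_boot classical_sets topology.
From mathcomp Require Import boolp.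
Local Open Scope classical_set_scope.

Section Proof14.
Context {X : topologicalType}.

Lemma proper_gdelta (a : set X) : Gdelta a -> a <> setT ->
  exists W : nat -> set X, (forall k, open (W k) /\ W k <> setT) /\
    (forall k, a `<=` W k) /\ (forall x, (forall k, W k x) -> a x).
Proof.
move=> [F oF aE] aT.
have [j0 Fj0] : exists j, F j <> setT.
  apply: contrapT => H; apply: aT; rewrite aE.
  apply/seteqP; split => // x _ i _.
  have -> : F i = setT by apply: contrapT => Hi; apply: H; exists i.
  done.
exists (fun i => F i `&` F j0); split; [|split].
- move=> k; split; first exact: openI.
  move=> E; apply: Fj0; apply/seteqP; split => // x _.
  by have [] : (F k `&` F j0) x by rewrite E.
- move=> k x ax; rewrite aE in ax; split; exact: ax.
- move=> x H; rewrite aE => i _; exact: (H i).1.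
Qed.

Lemma win_cof (A B : set (set X)) (hA : forall a, A a -> Gdelta a) sigma :
  winning_strategyOne A B sigma -> cof_le_omega A B.
Proof.
move=> [sA win].
have hW : forall s : seq (set X), exists W : nat -> set X,
   sigma s <> setT -> (forall k, open (W k) /\ W k <> setT) /\
    (forall k, sigma s `<=` W k) /\ (forall x, (forall k, W k x) -> sigma s x).
  move=> s; have [->|nT] := pselect (sigma s = setT).
    by exists (fun=> set0).
  have [W HW] := (@proper_gdelta _ (hA _ (sA s)) nT); by exists W.
have [W HW] := choice hW.
pose pos (ks : seq nat) := foldl (fun s k => rcons s (W s k)) [::] ks.
have posr : forall ks k, pos (rcons ks k) = rcons (pos ks) (W (pos ks) k).
  by move=> ks k; rewrite /pos foldl_rcons.
exists (fun n => match unpickle n with Some ks => sigma (pos ks) | None => sigma [::] end).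
split; first by move=> n; case: (unpickle n).
move=> b Bb; apply: contrapT => Hn.
have nb : forall ks, ~ b `<=` sigma (pos ks).
  move=> ks H; apply: Hn; exists (pickle ks); by rewrite pickleK.
have hg : forall s : seq (set X), exists k : nat, ~ b `<=` sigma s -> ~ b `<=` W s k.
  move=> s; have [H|H] := pselect (~ b `<=` sigma s); last by exists 0.
  have sT : sigma s <> setT by move=> E; apply: (H); rewrite E.
  apply: contrapT => Hk; apply: (H) => x bx.
  apply: (HW s sT).2.2 => k.
  apply: contrapT => Hx; apply: Hk; exists k => _ Hb; exact: Hx (Hb x bx).
have [g Hg] := choice hg.
pose K := fix K n := if n is n'.+1 then rcons (K n') (g (pos (K n'))) else [::].
pose U n := W (pos (K n)) (g (pos (K n))).
have UK : forall n, [seq U i | i <- iota 0 n] = pos (K n).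
  have KS : forall n, K n.+1 = rcons (K n) (g (pos (K n))) by [].
  elim=> [//|n IH].
  by rewrite -addn1 iotaD map_cat IH /= cats1 addn1 KS posr.
have sT : forall n, sigma (pos (K n)) <> setT.
  by move=> n E; apply: (nb (K n)); rewrite E.
have pl : play_by sigma U.
  move=> n; rewrite UK; split; first exact: ((HW _ (sT n)).1 _).1.
  split; first exact: ((HW _ (sT n)).1 _).2.
  exact: (HW _ (sT n)).2.1.
have [_ [_ Hc]] := win U pl.
have [u [n _ <-] bu] := Hc b Bb.
exact: (Hg _ (nb (K n)) bu).
Qed.

Lemma cof_pre (A B : set (set X)) : cof_le_omega A B ->
  exists sigma, predetermined sigma /\ winning_strategyOne A B sigma.
Proof.
move=> [F [AF cF]].
exists (fun s => F (size s)); split; first by move=> s t ->.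
split; first by move=> s.
move=> U pl; split; [|split].
- by move=> u [n _ <-]; exact: (pl n).1.
- by move=> [n _ E]; exact: (pl n).2.1 E.
- move=> b Bb; have [n bn] := cF b Bb.
  exists (U n); first by exists n.
  have := (pl n).2.2; rewrite size_map size_iota => H.
  by move=> x /bn /H.
Qed.

End Proof14.

Theorem mainTheorem14 (X : topologicalType) (A B : set (set X))
    (hA : forall a, A a -> Gdelta a) :
  [/\ ((exists sigma, winning_strategyOne A B sigma) <-> cof_le_omega A B),
      (cof_le_omega A B <->
         exists sigma, predetermined sigma /\ winning_strategyOne A B sigma) &
      ((exists sigma, winning_strategyOne A B sigma) <->
         exists sigma, predetermined sigma /\ winning_strategyOne A B sigma)].
Proof.
have i_ii : (exists sigma, winning_strategyOne A B sigma) -> cof_le_omega A B.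
  by move=> [s ws]; exact: (@win_cof X A B hA s ws).
have iii_i : (exists sigma, predetermined sigma /\ winning_strategyOne A B sigma) ->
   exists sigma, winning_strategyOne A B sigma.
  by move=> [s [_ ws]]; exists s.
split; split => //.
- by move=> /cof_pre [s [_ ws]]; exists s.
- exact: cof_pre.
- by move=> H; apply: i_ii; exact: iii_i.
- by move=> H; apply: cof_pre; exact: i_ii.
Qed.
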